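(* Let $n,m$ be positive integers with $m+2\le n$. Then $\gamma_{gr}(P_n^m)=n-m$.
   Context: $P_n^m$ has vertex set $[n]$, distinct $i,j$ adjacent iff $|i-j|\le m$. $\gamma_{gr}$ is the Grundy domination number: the maximum length of a sequence $(v_1,\dots,v_k)$ of distinct vertices whose set is dominating and such that each $N[v_i]\setminus\bigcup_{j<i}N[v_j]$ is non-empty ($N[\cdot]$ the closed neighborhood). *)

(* Defs.v *)
From mathcomp Require Import all_boot.
Set Implicit Arguments. Unset Strict Implicit. Unset Printing Implicit Defensive.

(* Graph P_n^m: vertex set [n] represented by 'I_n (vertex i+1 <-> ordinal i);
   distinct i,j adjacent iff |i-j| <= m
   (|i-j| <= m written with truncated subtraction on both sides). *)
Definition pm_adj (n m : nat) (i j : 'I_n) : bool :=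
  (i != j) && ((i : nat) - j <= m) && ((j : nat) - i <= m).

Definition cnbhd (n m : nat) (v : 'I_n) : {set 'I_n} :=
  [set u | (u == v) || pm_adj m u v].

Definition cnbhd_seq (n m : nat) (s : seq 'I_n) : {set 'I_n} :=
  \bigcup_(v <- s) cnbhd m v.

Definition grundy_dom_seq (n m : nat) (s : seq 'I_n) : Prop :=
  [/\ uniq s,
      (forall (s1 s2 : seq 'I_n) (v : 'I_n), s = s1 ++ v :: s2 ->
         ~~ (cnbhd m v \subset cnbhd_seq m s1)) &
      cnbhd_seq m s = [set: 'I_n]].

Definition grundy_dom_number_is (n m k : nat) : Prop :=
  (exists s : seq 'I_n, grundy_dom_seq m s /\ size s = k) /\
  (forall s : seq 'I_n, grundy_dom_seq m s -> size s <= k).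

(* Main.v *)
Require Import Defs.
From mathcomp Require Import all_boot.
From mathcomp Require Import zify.
Set Implicit Arguments. Unset Strict Implicit. Unset Printing Implicit Defensive.

Lemma cnbhd_seqP n m (s : seq 'I_n) x :
  reflect (exists2 v, v \in s & x \in cnbhd m v) (x \in cnbhd_seq m s).
Proof.
rewrite /cnbhd_seq bigcup_seq; apply: (iffP bigcupP) => [[v] | [v]]; by exists v.
Qed.

Lemma cnbhdE n m (v x : 'I_n) :
  (x \in cnbhd m v) = ((x : nat) - v <= m) && ((v : nat) - x <= m).
Proof.
rewrite inE /pm_adj; case: eqVneq => [->|//]; by rewrite subnn.
Qed.

Lemma cnbhd_seq_rcons n m (s : seq 'I_n) v :
  cnbhd_seq m (s ++ [:: v]) = cnbhd_seq m s :|: cnbhd m v.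
Proof. by rewrite /cnbhd_seq big_cat /= big_cons big_nil setU0. Qed.

Lemma grow n m (s2 s1 : seq 'I_n) :
  (forall (t1 t2 : seq 'I_n) (v : 'I_n), s1 ++ s2 = t1 ++ v :: t2 ->
         ~~ (cnbhd m v \subset cnbhd_seq m t1)) ->
  #|cnbhd_seq m s1| + size s2 <= #|cnbhd_seq m (s1 ++ s2)|.
Proof.
elim: s2 s1 => [|v s2 IH] s1 H; first by rewrite cats0 addn0.
have H1 := H s1 s2 v erefl.
have := IH (s1 ++ [:: v]); rewrite -catA /= => /(_ H).
rewrite cnbhd_seq_rcons => h; apply: leq_trans h.
rewrite /= addnS -addSn leq_add2r; apply: proper_card.
rewrite properE subsetUl /=; apply: contra H1 => h.
by apply: subset_trans h; apply: subsetUr.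
Qed.

Lemma card_cnbhd n m (v : 'I_n) : m < n -> m < #|cnbhd m v|.
Proof.
move=> mn; case: n v mn => [[]//|n] v mn.
set a := (v : nat) - m.
have -> : m.+1 = #|[set (inord (a + i) : 'I_n.+1) | i : 'I_m.+1]|.
  rewrite card_imset ?card_ord // => i j /(congr1 val) /=.
  have := ltn_ord i; have := ltn_ord j; have := ltn_ord v => h1 h2 h3.
  rewrite !inordK; try lia. move=> *; apply: val_inj => /=; lia.
apply: subset_leq_card; apply/subsetP => x /imsetP [i _ ->].
have := ltn_ord i; have := ltn_ord v => h1 h2.
rewrite cnbhdE inordK; lia.
Qed.

Theorem corollary2 (n m : nat) :
  0 < n -> 0 < m -> m + 2 <= n -> grundy_dom_number_is n m (n - m).
Proof.
move=> n0 m0 mn; split; last first.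
  move=> [|v t] [_ Hs _] //=.
  have h2 := @grow n m t [:: v] Hs.
  have h1 := card_cnbhd v (_ : m < n).
  have h3 := max_card (cnbhd_seq m ([:: v] ++ t)).
  rewrite card_ord /cnbhd_seq big_seq1 in h2 h3.
  have h4 := h1 ltac:(lia). rewrite /cnbhd_seq in h3. lia.
case: n n0 mn => [//|n] _ mn.
pose s := [seq inord i : 'I_n.+1 | i <- iota 0 (n.+1 - m)].
have nthE k : k < n.+1 - m -> (nth ord0 s k : nat) = k.
  by move=> hk; rewrite (nth_map 0) ?size_iota // nth_iota // add0n inordK //; lia.
have memE x : (x \in s) = ((x : nat) < n.+1 - m).
  apply/mapP/idP => [[i] | h].
    by rewrite mem_iota => /andP [_ hi] ->; rewrite inordK; lia.
  by exists (x : nat); rewrite ?mem_iota ?inord_val //; lia.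
exists s; split; last by rewrite size_map size_iota.
split.
- rewrite map_inj_in_uniq ?iota_uniq // => i j; rewrite !mem_iota => hi hj.
  move/(congr1 val); rewrite /= !inordK //; lia.
- move=> s1 s2 v E.
  have hk : size s1 < size s by rewrite E size_cat /=; lia.
  have hs : size s = n.+1 - m by rewrite size_map size_iota.
  have vE : (v : nat) = size s1.
    by have := nthE (size s1) ltac:(rewrite -hs //); rewrite E nth_cat ltnn subnn.
  have s1E : s1 = take (size s1) s by rewrite E take_size_cat.
  apply/subsetPn; exists (inord (v + m)).
    by rewrite cnbhdE inordK; lia.
  apply/cnbhd_seqP => [[w hw]]; rewrite cnbhdE inordK; last by lia.
  move: hw; rewrite s1E => /(nthP ord0) [j]; rewrite size_take hs.
  rewrite ifT; last by rewrite -hs.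
  move=> hj; rewrite nth_take // => <-; rewrite nthE; lia.
- apply/setP => x; rewrite inE; apply/cnbhd_seqP.
  case: (leqP (x : nat) m) => hx; have hx2 := ltn_ord x.
    exists ord0; first by rewrite memE /=; lia.
    by rewrite cnbhdE /=; lia.
  exists (inord (x - m)); first by rewrite memE inordK; lia.
  by rewrite cnbhdE inordK; lia.
Qed.
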